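(* Let $N\ge2$. The elements $x_a^2x_b$, $x_ax_bx_a$ ($a,b\in\{1,\dots,N\}$, $a\ne b$) and $x_a^3$ ($a\in\{1,\dots,N\}$) of $C(S^{N-1,1}_{\mathbb R,*})$ are linearly independent.
   Context: $C(S^{N-1}_{\mathbb R,+})$ is the universal $C^*$-algebra generated by self-adjoint $x_1,\dots,x_N$ with $\sum x_i^2=1$; $C(S^{N-1,1}_{\mathbb R,*})$ is its quotient by the relations $x_ix_jx_k=0$ for $i,j,k$ pairwise distinct and $x_ix_jx_k=x_kx_jx_i$ otherwise; $x_i$ denote the images of the generators. *)

(* Defs.v *)
From Stdlib Require Import Reals.
Open Scope R_scope.

Record Cplx : Type := Cmk { Cre : R ; Cim : R }.
Definition C0 : Cplx := Cmk 0 0.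
Definition C1 : Cplx := Cmk 1 0.
Definition Cadd (a b : Cplx) : Cplx := Cmk (Cre a + Cre b) (Cim a + Cim b).
Definition Cmul (a b : Cplx) : Cplx :=
  Cmk (Cre a * Cre b - Cim a * Cim b) (Cre a * Cim b + Cim a * Cre b).
Definition Cconj (a : Cplx) : Cplx := Cmk (Cre a) (- Cim a).
Definition Cabs (a : Cplx) : R := sqrt (Cre a * Cre a + Cim a * Cim a).

Record CStarAlg : Type := {
  car :> Type;
  azero : car; aone : car;
  aadd : car -> car -> car; aopp : car -> car;
  amul : car -> car -> car; asmul : Cplx -> car -> car;
  astar : car -> car; anorm : car -> R;
  aadd_assoc : forall x y z, aadd x (aadd y z) = aadd (aadd x y) z;
  aadd_comm : forall x y, aadd x y = aadd y x;
  aadd_0 : forall x, aadd x azero = x;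
  aadd_opp : forall x, aadd x (aopp x) = azero;
  asmul_assoc : forall a b x, asmul a (asmul b x) = asmul (Cmul a b) x;
  asmul_1 : forall x, asmul C1 x = x;
  asmul_addl : forall a b x, asmul (Cadd a b) x = aadd (asmul a x) (asmul b x);
  asmul_addr : forall a x y, asmul a (aadd x y) = aadd (asmul a x) (asmul a y);
  amul_assoc : forall x y z, amul x (amul y z) = amul (amul x y) z;
  amul_1l : forall x, amul aone x = x;
  amul_1r : forall x, amul x aone = x;
  amul_addl : forall x y z, amul (aadd x y) z = aadd (amul x z) (amul y z);
  amul_addr : forall x y z, amul x (aadd y z) = aadd (amul x y) (amul x z);
  amul_smull : forall a x y, amul (asmul a x) y = asmul a (amul x y);
  amul_smulr : forall a x y, amul x (asmul a y) = asmul a (amul x y);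
  astar_invol : forall x, astar (astar x) = x;
  astar_add : forall x y, astar (aadd x y) = aadd (astar x) (astar y);
  astar_smul : forall a x, astar (asmul a x) = asmul (Cconj a) (astar x);
  astar_mul : forall x y, astar (amul x y) = amul (astar y) (astar x);
  anorm_eq0 : forall x, anorm x = 0 -> x = azero;
  anorm_tri : forall x y, anorm (aadd x y) <= anorm x + anorm y;
  anorm_smul : forall a x, anorm (asmul a x) = Cabs a * anorm x;
  anorm_mul : forall x y, anorm (amul x y) <= anorm x * anorm y;
  anorm_cstar : forall x, anorm (amul (astar x) x) = anorm x * anorm x;
  acomplete : forall u : nat -> car,
    (forall eps, 0 < eps -> exists M, forall m n, (M <= m)%nat -> (M <= n)%nat ->
        anorm (aadd (u m) (aopp (u n))) < eps) ->
    exists l, forall eps, 0 < eps -> exists M, forall n, (M <= n)%nat ->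
        anorm (aadd (u n) (aopp l)) < eps
}.

Arguments azero {c}. Arguments aone {c}. Arguments aadd {c}. Arguments aopp {c}.
Arguments amul {c}. Arguments asmul {c}. Arguments astar {c}. Arguments anorm {c}.

Fixpoint sumA {A : CStarAlg} (f : nat -> A) (n : nat) : A :=
  match n with O => azero | S k => aadd (sumA f k) (f k) end.

Definition is_star_hom (A B : CStarAlg) (phi : A -> B) : Prop :=
  (forall x y, phi (aadd x y) = aadd (phi x) (phi y)) /\
  (forall a x, phi (asmul a x) = asmul a (phi x)) /\
  (forall x y, phi (amul x y) = amul (phi x) (phi y)) /\
  (forall x, phi (astar x) = astar (phi x)) /\
  phi aone = aone.

(* Defining relations of C(S^{N-1,1}_{R,*}), generators indexed by 0..N-1 *)
Definition rel_S (N : nat) (A : CStarAlg) (x : nat -> A) : Prop :=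
  (forall i, (i < N)%nat -> astar (x i) = x i) /\
  sumA (fun i => amul (x i) (x i)) N = aone /\
  (forall i j k, (i < N)%nat -> (j < N)%nat -> (k < N)%nat ->
      i <> j -> j <> k -> i <> k -> amul (amul (x i) (x j)) (x k) = azero) /\
  (forall i j k, (i < N)%nat -> (j < N)%nat -> (k < N)%nat ->
      ~ (i <> j /\ j <> k /\ i <> k) ->
      amul (amul (x i) (x j)) (x k) = amul (amul (x k) (x j)) (x i)).

Definition is_universal_S (N : nat) (U : CStarAlg) (u : nat -> U) : Prop :=
  rel_S N U u /\
  forall (B : CStarAlg) (y : nat -> B), rel_S N B y ->
    exists! phi : U -> B, is_star_hom U B phi /\ (forall i, (i < N)%nat -> phi (u i) = y i).

Definition lincomb5p3 (N : nat) (A : CStarAlg) (x : nat -> A)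
    (alpha beta : nat -> nat -> Cplx) (gamma : nat -> Cplx) : A :=
  aadd
    (sumA (fun a => sumA (fun b =>
        if Nat.eq_dec a b then azero
        else aadd (asmul (alpha a b) (amul (amul (x a) (x a)) (x b)))
                  (asmul (beta a b) (amul (amul (x a) (x b)) (x a)))) N) N)
    (sumA (fun a => asmul (gamma a) (amul (amul (x a) (x a)) (x a))) N).

(* Main.v *)
From Pilot Require Import Defs.
From Stdlib Require Import Reals Lra Psatz.
Import Pilot.Defs.
Open Scope R_scope.

Lemma Cext : forall a b : Cplx, Cre a = Cre b -> Cim a = Cim b -> a = b.
Proof. intros [] [] H1 H2; simpl in *; subst; reflexivity. Qed.

Definition Copp (a : Cplx) : Cplx := Cmk (- Cre a) (- Cim a).
Definition cn2 (z : Cplx) : R := Cre z * Cre z + Cim z * Cim z.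

Lemma cn2_ge0 z : 0 <= cn2 z.
Proof. unfold cn2; nra. Qed.
Lemma cn2_mul a b : cn2 (Cmul a b) = cn2 a * cn2 b.
Proof. destruct a, b; unfold cn2; simpl; ring. Qed.
Lemma cn2_add a b : cn2 (Cadd a b) <= 2 * cn2 a + 2 * cn2 b.
Proof. destruct a as [p q], b as [r s]; unfold cn2; simpl.
  pose proof (Rle_0_sqr (p - r)); pose proof (Rle_0_sqr (q - s)); unfold Rsqr in *; nra. Qed.

Record M2 : Type := mkM { e11 : Cplx; e12 : Cplx; e21 : Cplx; e22 : Cplx }.
Lemma Mext : forall A B : M2, e11 A = e11 B -> e12 A = e12 B -> e21 A = e21 B -> e22 A = e22 B -> A = B.
Proof. intros [] [] H1 H2 H3 H4; simpl in *; subst; reflexivity. Qed.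

Definition mzero := mkM C0 C0 C0 C0.
Definition mone := mkM C1 C0 C0 C1.
Definition madd A B := mkM (Cadd (e11 A) (e11 B)) (Cadd (e12 A) (e12 B)) (Cadd (e21 A) (e21 B)) (Cadd (e22 A) (e22 B)).
Definition mopp A := mkM (Copp (e11 A)) (Copp (e12 A)) (Copp (e21 A)) (Copp (e22 A)).
Definition mmul A B := mkM
  (Cadd (Cmul (e11 A) (e11 B)) (Cmul (e12 A) (e21 B)))
  (Cadd (Cmul (e11 A) (e12 B)) (Cmul (e12 A) (e22 B)))
  (Cadd (Cmul (e21 A) (e11 B)) (Cmul (e22 A) (e21 B)))
  (Cadd (Cmul (e21 A) (e12 B)) (Cmul (e22 A) (e22 B))).
Definition msmul a A := mkM (Cmul a (e11 A)) (Cmul a (e12 A)) (Cmul a (e21 A)) (Cmul a (e22 A)).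
Definition mstar A := mkM (Cconj (e11 A)) (Cconj (e21 A)) (Cconj (e12 A)) (Cconj (e22 A)).

Ltac mdes := repeat match goal with
  | A : M2 |- _ => destruct A
  | c : Cplx |- _ => destruct c end.
Ltac meq := intros; mdes;
  apply Mext; simpl; apply Cext; simpl; ring.

Record V2 : Type := mkV { v1 : Cplx; v2 : Cplx }.
Definition mapp A v := mkV (Cadd (Cmul (e11 A) (v1 v)) (Cmul (e12 A) (v2 v)))
                           (Cadd (Cmul (e21 A) (v1 v)) (Cmul (e22 A) (v2 v))).
Definition vadd x y := mkV (Cadd (v1 x) (v1 y)) (Cadd (v2 x) (v2 y)).
Definition nsq v := cn2 (v1 v) + cn2 (v2 v).
Definition vlen v := sqrt (nsq v).
Definition dot4 x y := Cre (v1 x) * Cre (v1 y) + Cim (v1 x) * Cim (v1 y)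
                     + Cre (v2 x) * Cre (v2 y) + Cim (v2 x) * Cim (v2 y).

Lemma nsq_ge0 v : 0 <= nsq v.
Proof. unfold nsq; pose proof (cn2_ge0 (v1 v)); pose proof (cn2_ge0 (v2 v)); lra. Qed.
Lemma vlen_ge0 v : 0 <= vlen v.
Proof. apply sqrt_pos. Qed.
Lemma vlen_sq v : vlen v * vlen v = nsq v.
Proof. apply sqrt_sqrt, nsq_ge0. Qed.

Lemma CS x y : dot4 x y * dot4 x y <= nsq x * nsq y.
Proof.
  destruct x as [[a b] [c d]], y as [[e f] [g h]]; unfold dot4, nsq, cn2; simpl.
  assert (H: nsq (mkV (Cmk a b) (Cmk c d)) * nsq (mkV (Cmk e f) (Cmk g h)) -
     (a*e+b*f+c*g+d*h)*(a*e+b*f+c*g+d*h) =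
     (a*f-b*e)*(a*f-b*e) + (a*g-c*e)*(a*g-c*e) + (a*h-d*e)*(a*h-d*e)
     + (b*g-c*f)*(b*g-c*f) + (b*h-d*f)*(b*h-d*f) + (c*h-d*g)*(c*h-d*g)).
  { unfold nsq, cn2; simpl; ring. }
  unfold nsq, cn2 in H; simpl in H.
  pose proof (Rle_0_sqr (a*f-b*e)); pose proof (Rle_0_sqr (a*g-c*e)); pose proof (Rle_0_sqr (a*h-d*e));
  pose proof (Rle_0_sqr (b*g-c*f)); pose proof (Rle_0_sqr (b*h-d*f)); pose proof (Rle_0_sqr (c*h-d*g));
  unfold Rsqr in *; lra.
Qed.

Lemma dot_le x y : dot4 x y <= vlen x * vlen y.
Proof.
  pose proof (CS x y). pose proof (vlen_ge0 x); pose proof (vlen_ge0 y).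
  rewrite <- (vlen_sq x), <- (vlen_sq y) in H.
  assert (Hp : 0 <= vlen x * vlen y) by (apply Rmult_le_pos; auto).
  set (p := vlen x * vlen y) in *. set (d := dot4 x y) in *.
  replace (vlen x * vlen x * (vlen y * vlen y)) with (p * p) in H by (unfold p; ring).
  destruct (Rle_dec d p); auto. exfalso.
  assert (p * p < d * d) by (apply Rmult_le_0_lt_compat; lra). lra.
Qed.

Lemma vlen_tri x y : vlen (vadd x y) <= vlen x + vlen y.
Proof.
  pose proof (dot_le x y). pose proof (vlen_ge0 x); pose proof (vlen_ge0 y).
  pose proof (vlen_ge0 (vadd x y)).
  assert (E : nsq (vadd x y) = nsq x + nsq y + 2 * dot4 x y).
  { destruct x as [[] []], y as [[] []]; unfold nsq, cn2, dot4; simpl; ring. }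
  rewrite <- vlen_sq, <- (vlen_sq x), <- (vlen_sq y) in E. nra.
Qed.

Lemma le_sq_vlen x M : 0 <= M -> nsq x <= M * M -> vlen x <= M.
Proof. intros. unfold vlen. rewrite <- (sqrt_square M) by auto. apply sqrt_le_1_alt; auto. Qed.

Definition tA A := cn2 (e11 A) + cn2 (e12 A) + cn2 (e21 A) + cn2 (e22 A).
Lemma tA_ge0 A : 0 <= tA A.
Proof. unfold tA; pose proof (cn2_ge0 (e11 A)); pose proof (cn2_ge0 (e12 A));
  pose proof (cn2_ge0 (e21 A)); pose proof (cn2_ge0 (e22 A)); lra. Qed.

Lemma nsq_app_bound A v : nsq (mapp A v) <= 2 * tA A * nsq v.
Proof.
  unfold nsq, mapp, tA; simpl.
  pose proof (cn2_add (Cmul (e11 A) (v1 v)) (Cmul (e12 A) (v2 v))).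
  pose proof (cn2_add (Cmul (e21 A) (v1 v)) (Cmul (e22 A) (v2 v))).
  rewrite !cn2_mul in H, H0.
  pose proof (cn2_ge0 (e11 A)); pose proof (cn2_ge0 (e12 A));
  pose proof (cn2_ge0 (e21 A)); pose proof (cn2_ge0 (e22 A));
  pose proof (cn2_ge0 (v1 v)); pose proof (cn2_ge0 (v2 v)).
  nra.
Qed.

Definition NE (A : M2) (r : R) : Prop := exists v, nsq v <= 1 /\ r = vlen (mapp A v).

Lemma NE_bound A : bound (NE A).
Proof.
  exists (sqrt (2 * tA A)). intros r [v [Hv ->]]. unfold vlen. apply sqrt_le_1_alt.
  pose proof (nsq_app_bound A v). pose proof (tA_ge0 A). nra.
Qed.
Lemma NE_ne A : exists r, NE A r.
Proof. exists (vlen (mapp A (mkV C0 C0))). exists (mkV C0 C0). split; auto.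
  unfold nsq, cn2; simpl; lra. Qed.

Definition mnorm (A : M2) : R := proj1_sig (completeness (NE A) (NE_bound A) (NE_ne A)).
Lemma mnorm_lub A : is_lub (NE A) (mnorm A).
Proof. unfold mnorm; destruct completeness; auto. Qed.

Lemma mnorm_ge0 A : 0 <= mnorm A.
Proof. destruct (mnorm_lub A) as [H _]. apply Rle_trans with (vlen (mapp A (mkV C0 C0))).
  apply vlen_ge0. apply H. exists (mkV C0 C0); split; auto. unfold nsq, cn2; simpl; lra. Qed.

Definition rscale (r : R) v := mkV (Cmk (r * Cre (v1 v)) (r * Cim (v1 v))) (Cmk (r * Cre (v2 v)) (r * Cim (v2 v))).

Lemma mnorm_app A v : vlen (mapp A v) <= mnorm A * vlen v.
Proof.
  pose proof (mnorm_ge0 A) as HN. pose proof (nsq_ge0 v) as Hv.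
  destruct (Req_dec (nsq v) 0) as [H0|H0].
  - assert (E: nsq (mapp A v) = 0).
    { pose proof (nsq_app_bound A v). pose proof (nsq_ge0 (mapp A v)). rewrite H0 in H. lra. }
    unfold vlen; rewrite E, sqrt_0. apply Rmult_le_pos; auto. apply sqrt_pos.
  - set (l := vlen v). assert (Hl : 0 < l).
    { unfold l, vlen. apply sqrt_lt_R0. lra. }
    set (w := rscale (/ l) v).
    assert (Hw : nsq w = / l * / l * nsq v).
    { unfold w, nsq, cn2; simpl; ring. }
    assert (Hw1 : nsq w <= 1).
    { rewrite Hw, <- (vlen_sq v). fold l. field_simplify; lra. }
    assert (HAw : nsq (mapp A w) = / l * / l * nsq (mapp A v)).
    { unfold w; destruct v as [[] []]; destruct A as [[] [] [] []]; unfold nsq, cn2; simpl; ring. }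
    destruct (mnorm_lub A) as [Hub _].
    assert (Hle : vlen (mapp A w) <= mnorm A) by (apply Hub; exists w; auto).
    pose proof (vlen_ge0 (mapp A w)).
    assert (nsq (mapp A w) <= mnorm A * mnorm A) by (rewrite <- vlen_sq; nra).
    rewrite HAw in H1.
    apply le_sq_vlen. nra.
    assert (nsq (mapp A v) = l * l * (/ l * / l * nsq (mapp A v))) by (field; lra).
    rewrite H2. replace (mnorm A * l * (mnorm A * l)) with (l * l * (mnorm A * mnorm A)) by ring.
    apply Rmult_le_compat_l; nra.
Qed.

Lemma mnorm_le A M : 0 <= M -> (forall v, vlen (mapp A v) <= M * vlen v) -> mnorm A <= M.
Proof.
  intros HM H. destruct (mnorm_lub A) as [_ Hl]. apply Hl. intros r [v [Hv ->]].
  eapply Rle_trans; [apply H|]. assert (vlen v <= 1).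
  { apply le_sq_vlen; lra. } pose proof (vlen_ge0 v). nra.
Qed.
Lemma Vext : forall x y : V2, v1 x = v1 y -> v2 x = v2 y -> x = y.
Proof. intros [] [] H1 H2; simpl in *; subst; reflexivity. Qed.
Ltac vdes := repeat match goal with
  | A : M2 |- _ => destruct A
  | A : V2 |- _ => destruct A
  | c : Cplx |- _ => destruct c end.

Definition cscale a x := mkV (Cmul a (v1 x)) (Cmul a (v2 x)).

Lemma app_add A B v : mapp (madd A B) v = vadd (mapp A v) (mapp B v).
Proof. vdes; apply Vext; apply Cext; simpl; ring. Qed.
Lemma app_mul A B v : mapp (mmul A B) v = mapp A (mapp B v).
Proof. vdes; apply Vext; apply Cext; simpl; ring. Qed.
Lemma app_smul a A v : mapp (msmul a A) v = cscale a (mapp A v).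
Proof. vdes; apply Vext; apply Cext; simpl; ring. Qed.
Lemma vlen_cscale a x : vlen (cscale a x) = Cabs a * vlen x.
Proof.
  unfold vlen, Cabs. rewrite <- sqrt_mult. f_equal. vdes; unfold nsq, cn2; simpl; ring.
  pose proof (cn2_ge0 a); unfold cn2 in H; lra. apply nsq_ge0.
Qed.
Lemma adj_dot A w v : dot4 (mapp (mstar A) w) v = dot4 w (mapp A v).
Proof. vdes; unfold dot4; simpl; ring. Qed.
Lemma dot_self x : dot4 x x = nsq x.
Proof. vdes; unfold dot4, nsq, cn2; simpl; ring. Qed.

Lemma mnorm_tri A B : mnorm (madd A B) <= mnorm A + mnorm B.
Proof.
  pose proof (mnorm_ge0 A); pose proof (mnorm_ge0 B).
  apply mnorm_le. lra. intros v. rewrite app_add.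
  eapply Rle_trans. apply vlen_tri.
  pose proof (mnorm_app A v); pose proof (mnorm_app B v). lra.
Qed.

Lemma mnorm_mul A B : mnorm (mmul A B) <= mnorm A * mnorm B.
Proof.
  pose proof (mnorm_ge0 A); pose proof (mnorm_ge0 B).
  apply mnorm_le. apply Rmult_le_pos; auto. intros v. rewrite app_mul.
  eapply Rle_trans. apply mnorm_app.
  pose proof (mnorm_app B v). rewrite Rmult_assoc. apply Rmult_le_compat_l; auto.
Qed.

Lemma Cabs_ge0 a : 0 <= Cabs a.
Proof. apply sqrt_pos. Qed.

Lemma mnorm_smul a A : mnorm (msmul a A) = Cabs a * mnorm A.
Proof.
  pose proof (mnorm_ge0 A); pose proof (Cabs_ge0 a); pose proof (mnorm_ge0 (msmul a A)).
  apply Rle_antisym.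
  - apply mnorm_le. apply Rmult_le_pos; auto. intros v. rewrite app_smul, vlen_cscale.
    rewrite Rmult_assoc. apply Rmult_le_compat_l; auto. apply mnorm_app.
  - destruct (Req_dec (Cabs a) 0) as [E|E]. rewrite E; lra.
    assert (mnorm A <= mnorm (msmul a A) / Cabs a).
    { apply mnorm_le. unfold Rdiv; apply Rmult_le_pos; [lra|]; apply Rlt_le, Rinv_0_lt_compat; lra. intros v.
      pose proof (mnorm_app (msmul a A) v). rewrite app_smul, vlen_cscale in H2.
      apply Rmult_le_reg_l with (Cabs a). lra.
      replace (Cabs a * (mnorm (msmul a A) / Cabs a * vlen v)) with (mnorm (msmul a A) * vlen v)
        by (field; lra). auto. }
    apply Rmult_le_reg_r with (/ Cabs a). apply Rinv_0_lt_compat; lra.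
    replace (Cabs a * mnorm A * / Cabs a) with (mnorm A) by (field; lra). auto.
Qed.

Lemma mnorm_cstar_ge A : mnorm A * mnorm A <= mnorm (mmul (mstar A) A).
Proof.
  pose proof (mnorm_ge0 A); pose proof (mnorm_ge0 (mmul (mstar A) A)) as H0.
  set (K := mnorm (mmul (mstar A) A)) in *.
  assert (mnorm A <= sqrt K).
  { apply mnorm_le. apply sqrt_pos. intros v.
    assert (nsq (mapp A v) <= K * (vlen v * vlen v)).
    { rewrite <- dot_self, <- adj_dot, <- app_mul.
      eapply Rle_trans. apply dot_le. pose proof (mnorm_app (mmul (mstar A) A) v).
      pose proof (vlen_ge0 v). fold K in H1. nra. }
    apply le_sq_vlen. apply Rmult_le_pos. apply sqrt_pos. apply vlen_ge0.
    replace (sqrt K * vlen v * (sqrt K * vlen v)) with (sqrt K * sqrt K * (vlen v * vlen v)) by ring.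
    rewrite sqrt_sqrt; auto. }
  assert (mnorm A * mnorm A <= sqrt K * sqrt K) by (apply Rmult_le_compat; auto).
  rewrite sqrt_sqrt in H2; auto.
Qed.

Lemma mstar_invol A : mstar (mstar A) = A.
Proof. vdes; apply Mext; apply Cext; simpl; ring. Qed.

Lemma mnorm_star A : mnorm (mstar A) = mnorm A.
Proof.
  assert (forall B, mnorm B <= mnorm (mstar B)).
  { intros B. pose proof (mnorm_cstar_ge B). pose proof (mnorm_mul (mstar B) B).
    pose proof (mnorm_ge0 B); pose proof (mnorm_ge0 (mstar B)).
    destruct (Req_dec (mnorm B) 0) as [E|E]. lra.
    apply Rmult_le_reg_r with (mnorm B). lra. nra. }
  apply Rle_antisym; auto. pose proof (H (mstar A)) as H0; rewrite mstar_invol in H0; auto.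
Qed.

Lemma mnorm_cstar A : mnorm (mmul (mstar A) A) = mnorm A * mnorm A.
Proof.
  apply Rle_antisym. pose proof (mnorm_mul (mstar A) A) as H; rewrite mnorm_star in H; exact H.
  apply mnorm_cstar_ge.
Qed.

Definition e1v := mkV C1 C0.
Definition e2v := mkV C0 C1.
Lemma vlen_e1 : vlen e1v = 1.
Proof. unfold vlen, nsq, cn2; simpl. replace (1*1+0*0+(0*0+0*0)) with 1 by ring. apply sqrt_1. Qed.
Lemma vlen_e2 : vlen e2v = 1.
Proof. unfold vlen, nsq, cn2; simpl. replace (0*0+0*0+(1*1+0*0)) with 1 by ring. apply sqrt_1. Qed.

Lemma entry_bound A : cn2 (e11 A) <= mnorm A * mnorm A /\ cn2 (e21 A) <= mnorm A * mnorm A /\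
   cn2 (e12 A) <= mnorm A * mnorm A /\ cn2 (e22 A) <= mnorm A * mnorm A.
Proof.
  pose proof (mnorm_app A e1v) as H1; pose proof (mnorm_app A e2v) as H2.
  rewrite vlen_e1 in H1; rewrite vlen_e2 in H2. rewrite Rmult_1_r in H1, H2.
  pose proof (vlen_ge0 (mapp A e1v)); pose proof (vlen_ge0 (mapp A e2v)).
  assert (Q1: nsq (mapp A e1v) <= mnorm A * mnorm A) by (rewrite <- vlen_sq; nra).
  assert (Q2: nsq (mapp A e2v) <= mnorm A * mnorm A) by (rewrite <- vlen_sq; nra).
  destruct A as [[] [] [] []]; unfold nsq, cn2 in *; simpl in *.
  repeat split; nra.
Qed.

Lemma mnorm_eq0 A : mnorm A = 0 -> A = mzero.
Proof.
  intros H. pose proof (entry_bound A) as E. rewrite H in E.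
  destruct A as [[] [] [] []]; unfold cn2 in *; simpl in *.
  destruct E as [E1 [E2 [E3 E4]]].
  apply Mext; apply Cext; simpl; nra.
Qed.

Lemma mnorm_bound A : mnorm A <= sqrt (2 * tA A).
Proof.
  apply mnorm_le. apply sqrt_pos. intros v. unfold vlen. rewrite <- sqrt_mult.
  apply sqrt_le_1_alt. apply nsq_app_bound. pose proof (tA_ge0 A); lra. apply nsq_ge0.
Qed.
Definition pr (k : nat) (A : M2) : R :=
  match k with
  | 0 => Cre (e11 A) | 1 => Cim (e11 A) | 2 => Cre (e12 A) | 3 => Cim (e12 A)
  | 4 => Cre (e21 A) | 5 => Cim (e21 A) | 6 => Cre (e22 A) | 7 => Cim (e22 A)
  | _ => 0 end.

Lemma sq_abs x y M : x * x + y * y <= M * M -> 0 <= M -> Rabs x <= M /\ Rabs y <= M.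
Proof.
  intros H HM. split; apply Rabs_le; split; nra.
Qed.

Lemma pr_bound k A : Rabs (pr k A) <= mnorm A.
Proof.
  pose proof (entry_bound A) as [E1 [E2 [E3 E4]]]. pose proof (mnorm_ge0 A) as H0.
  unfold cn2 in *.
  destruct k as [|[|[|[|[|[|[|[|k]]]]]]]]; simpl;
  try (apply (sq_abs _ _ _ E1 H0)); try (apply (sq_abs _ _ _ E2 H0));
  try (apply (sq_abs _ _ _ E3 H0)); try (apply (sq_abs _ _ _ E4 H0)).
  rewrite Rabs_R0; auto.
Qed.

Lemma pr_sub k X Y : pr k (madd X (mopp Y)) = pr k X - pr k Y.
Proof. destruct k as [|[|[|[|[|[|[|[|k]]]]]]]]; simpl; ring. Qed.

Lemma ex_common (P : nat -> nat -> Prop) m :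
  (forall k, (k < m)%nat -> exists M, forall n, (M <= n)%nat -> P k n) ->
  exists M, forall k n, (k < m)%nat -> (M <= n)%nat -> P k n.
Proof.
  induction m; intros H.
  - exists 0%nat. intros; lia.
  - destruct IHm as [M1 H1]. intros; apply H; lia.
    destruct (H m) as [M2 H2]. lia.
    exists (Nat.max M1 M2). intros k n Hk Hn.
    destruct (Nat.eq_dec k m). subst; apply H2; lia. apply H1; lia.
Qed.

Lemma tA_pr A : tA A = pr 0 A * pr 0 A + pr 1 A * pr 1 A + pr 2 A * pr 2 A + pr 3 A * pr 3 A
  + pr 4 A * pr 4 A + pr 5 A * pr 5 A + pr 6 A * pr 6 A + pr 7 A * pr 7 A.
Proof. destruct A as [[] [] [] []]; unfold tA, cn2; simpl; ring. Qed.

Lemma m_complete : forall u : nat -> M2,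
    (forall eps, 0 < eps -> exists M, forall m n, (M <= m)%nat -> (M <= n)%nat ->
        mnorm (madd (u m) (mopp (u n))) < eps) ->
    exists l, forall eps, 0 < eps -> exists M, forall n, (M <= n)%nat ->
        mnorm (madd (u n) (mopp l)) < eps.
Proof.
  intros u Hc.
  assert (Hk : forall k, Cauchy_crit (fun n => pr k (u n))).
  { intros k eps He. destruct (Hc eps He) as [M HM]. exists M. intros n m Hn Hm.
    unfold Rdist. rewrite <- pr_sub. eapply Rle_lt_trans. apply pr_bound. apply HM; lia. }
  set (l := fun k => proj1_sig (R_complete _ (Hk k))).
  assert (Hl : forall k, Un_cv (fun n => pr k (u n)) (l k)).
  { intros k. unfold l. destruct R_complete; auto. }
  exists (mkM (Cmk (l 0%nat) (l 1%nat)) (Cmk (l 2%nat) (l 3%nat)) (Cmk (l 4%nat) (l 5%nat)) (Cmk (l 6%nat) (l 7%nat))).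
  intros eps He.
  destruct (ex_common (fun k n => Rabs (pr k (u n) - l k) < eps / 4) 8) as [M HM].
  { intros k _. destruct (Hl k (eps / 4)) as [M HM]. lra. exists M. intros n Hn. apply HM. lia. }
  exists M. intros n Hn.
  set (L := mkM (Cmk (l 0%nat) (l 1%nat)) (Cmk (l 2%nat) (l 3%nat)) (Cmk (l 4%nat) (l 5%nat)) (Cmk (l 6%nat) (l 7%nat))).
  assert (Hpk : forall k, (k < 8)%nat -> pr k L = l k).
  { intros k Hk8. destruct k as [|[|[|[|[|[|[|[|k]]]]]]]]; simpl; auto; lia. }
  assert (Q : forall k, (k < 8)%nat -> pr k (madd (u n) (mopp L)) * pr k (madd (u n) (mopp L)) < eps/4 * (eps/4)).
  { intros k Hk8. rewrite pr_sub, Hpk by auto. specialize (HM k n Hk8 Hn).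
    apply Rabs_def2 in HM. nra. }
  eapply Rle_lt_trans. apply mnorm_bound.
  replace eps with (sqrt (eps * eps)) by (apply sqrt_square; lra).
  apply sqrt_lt_1_alt. split. pose proof (tA_ge0 (madd (u n) (mopp L))). lra.
  rewrite tA_pr.
  pose proof (Q 0%nat ltac:(lia)); pose proof (Q 1%nat ltac:(lia)); pose proof (Q 2%nat ltac:(lia));
  pose proof (Q 3%nat ltac:(lia)); pose proof (Q 4%nat ltac:(lia)); pose proof (Q 5%nat ltac:(lia));
  pose proof (Q 6%nat ltac:(lia)); pose proof (Q 7%nat ltac:(lia)). lra.
Qed.

Definition M2alg : CStarAlg.
Proof.
  refine (@Build_CStarAlg M2 mzero mone madd mopp mmul msmul mstar mnorm
    _ _ _ _ _ _ _ _ _ _ _ _ _ _ _ _ _ _ _ _ _ _ _ _ _).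
  all: try meq.
  - exact mnorm_eq0.
  - exact mnorm_tri.
  - exact mnorm_smul.
  - exact mnorm_mul.
  - exact mnorm_cstar.
  - exact m_complete.
Defined.
Lemma sumA_ext (A : CStarAlg) (f g : nat -> A) n : (forall i, (i < n)%nat -> f i = g i) -> sumA f n = sumA g n.
Proof. induction n; intros H; simpl; auto. rewrite IHn, H; auto. Qed.

Lemma add_self_0 (A : CStarAlg) (x : A) : x = aadd x x -> x = azero.
Proof.
  intros H. rewrite <- (aadd_opp A x).
  replace (aadd x (aopp x)) with (aadd (aadd x x) (aopp x)) by (rewrite <- H; reflexivity).
  rewrite <- aadd_assoc, aadd_opp, aadd_0. reflexivity.
Qed.

Lemma hom_0 (A B : CStarAlg) (phi : A -> B) : is_star_hom A B phi -> phi azero = azero.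
Proof. intros [Ha _]. apply add_self_0. rewrite <- Ha, aadd_0. reflexivity. Qed.

Lemma hom_sumA (A B : CStarAlg) (phi : A -> B) (f : nat -> A) n : is_star_hom A B phi -> phi (sumA f n) = sumA (fun i => phi (f i)) n.
Proof.
  intros H. induction n; simpl. apply (hom_0 _ _ _ H).
  destruct H as [Ha _]. rewrite Ha, IHn. reflexivity.
Qed.

Lemma hom_lincomb N (A B : CStarAlg) (phi : A -> B) (x : nat -> A) (y : nat -> B) alpha beta gamma :
  is_star_hom A B phi -> (forall i, (i < N)%nat -> phi (x i) = y i) ->
  phi (lincomb5p3 N A x alpha beta gamma) = lincomb5p3 N B y alpha beta gamma.
Proof.
  intros H Hy. pose proof H as [Ha [Hs [Hm _]]]. unfold lincomb5p3.
  rewrite Ha, !hom_sumA by auto. f_equal.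
  - apply sumA_ext. intros i Hi. rewrite hom_sumA by auto. apply sumA_ext. intros j Hj.
    destruct (Nat.eq_dec i j). apply (hom_0 _ _ _ H).
    rewrite Ha, !Hs, !Hm, !Hy by auto. reflexivity.
  - apply sumA_ext. intros i Hi. rewrite Hs, !Hm, Hy by auto. reflexivity.
Qed.

Lemma sum0 (f : nat -> M2alg) n : (forall i, f i = mzero) -> sumA f n = mzero.
Proof. intros H; induction n; simpl; auto. rewrite IHn, H. meq. Qed.

Lemma sum2 (f : nat -> M2alg) n a b : a <> b -> (forall i, i <> a -> i <> b -> f i = mzero) ->
  sumA f n = madd (if Nat.ltb a n then f a else mzero) (if Nat.ltb b n then f b else mzero).
Proof.
  intros Hab H. induction n; simpl.
  - meq.
  - rewrite IHn. change (aadd ?x ?y) with (madd x y).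
    destruct (Nat.eq_dec n a) as [->|Ha].
    + replace (Nat.ltb a a) with false by (symmetry; apply Nat.ltb_irrefl).
      replace (Nat.ltb a (S a)) with true by (symmetry; apply Nat.ltb_lt; lia).
      replace (Nat.ltb b (S a)) with (Nat.ltb b a).
      2:{ destruct (Nat.ltb_spec b a), (Nat.ltb_spec b (S a)); auto; lia. }
      destruct (Nat.ltb _ _); meq.
    + destruct (Nat.eq_dec n b) as [->|Hb].
      * replace (Nat.ltb b b) with false by (symmetry; apply Nat.ltb_irrefl).
        replace (Nat.ltb b (S b)) with true by (symmetry; apply Nat.ltb_lt; lia).
        replace (Nat.ltb a (S b)) with (Nat.ltb a b).
        2:{ destruct (Nat.ltb_spec a b), (Nat.ltb_spec a (S b)); auto; lia. }
        destruct (Nat.ltb _ _); meq.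
      * rewrite (H n) by auto.
        replace (Nat.ltb a (S n)) with (Nat.ltb a n).
        2:{ destruct (Nat.ltb_spec a n), (Nat.ltb_spec a (S n)); auto; lia. }
        replace (Nat.ltb b (S n)) with (Nat.ltb b n).
        2:{ destruct (Nat.ltb_spec b n), (Nat.ltb_spec b (S n)); auto; lia. }
        destruct (Nat.ltb _ _); meq.
Qed.

Lemma sum2' (f : nat -> M2alg) n a b : a <> b -> (a < n)%nat -> (b < n)%nat ->
  (forall i, i <> a -> i <> b -> f i = mzero) -> sumA f n = madd (f a) (f b).
Proof.
  intros. rewrite (sum2 f n a b) by auto.
  replace (Nat.ltb a n) with true by (symmetry; apply Nat.ltb_lt; lia).
  replace (Nat.ltb b n) with true by (symmetry; apply Nat.ltb_lt; lia). reflexivity.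
Qed.

Definition Xm (z : Cplx) : M2 := mkM C0 z (Cconj z) C0.
Definition zf (a b : nat) (z w : Cplx) (i : nat) : Cplx :=
  if Nat.eq_dec i a then z else if Nat.eq_dec i b then w else C0.

Lemma zf_a a b z w : zf a b z w a = z.
Proof. unfold zf; destruct (Nat.eq_dec a a); congruence. Qed.
Lemma zf_b a b z w : a <> b -> zf a b z w b = w.
Proof. intros; unfold zf; destruct (Nat.eq_dec b a); [congruence|]. destruct (Nat.eq_dec b b); congruence. Qed.
Lemma zf_o a b z w i : i <> a -> i <> b -> zf a b z w i = C0.
Proof. intros; unfold zf; destruct (Nat.eq_dec i a); [congruence|]. destruct (Nat.eq_dec i b); congruence. Qed.

Lemma rel_y N a b z w : a <> b -> (a < N)%nat -> (b < N)%nat -> cn2 z + cn2 w = 1 ->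
  rel_S N M2alg (fun i => Xm (zf a b z w i)).
Proof.
  intros Hab Ha Hb Hzw. split; [|split; [|split]].
  - intros i _. simpl. apply Mext; apply Cext; simpl; ring.
  - rewrite (sum2' _ N a b) by (auto; intros i Hi1 Hi2; rewrite zf_o by auto; meq).
    rewrite zf_a, zf_b by auto. destruct z, w; unfold cn2 in Hzw; simpl in Hzw.
    apply Mext; apply Cext; simpl; lra.
  - intros i j k _ _ _ Hij Hjk Hik.
    destruct (Nat.eq_dec i a); [destruct (Nat.eq_dec j b)|].
    + subst. rewrite (zf_o a b z w k) by auto. meq.
    + rewrite (zf_o a b z w j) by (subst; auto). meq.
    + destruct (Nat.eq_dec i b).
      * destruct (Nat.eq_dec j a).
        -- subst. rewrite (zf_o a b z w k) by auto. meq.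
        -- rewrite (zf_o a b z w j) by (subst; auto). meq.
      * rewrite (zf_o a b z w i) by auto. meq.
  - intros. meq.
Qed.

Lemma lincomb_y N a b z w alpha beta gamma : a <> b -> (a < N)%nat -> (b < N)%nat ->
  lincomb5p3 N M2alg (fun i => Xm (zf a b z w i)) alpha beta gamma =
  madd (madd (madd (msmul (alpha a b) (mmul (mmul (Xm z) (Xm z)) (Xm w))) (msmul (beta a b) (mmul (mmul (Xm z) (Xm w)) (Xm z))))
             (madd (msmul (alpha b a) (mmul (mmul (Xm w) (Xm w)) (Xm z))) (msmul (beta b a) (mmul (mmul (Xm w) (Xm z)) (Xm w)))))
       (madd (msmul (gamma a) (mmul (mmul (Xm z) (Xm z)) (Xm z))) (msmul (gamma b) (mmul (mmul (Xm w) (Xm w)) (Xm w)))).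
Proof.
  intros Hab Ha Hb. unfold lincomb5p3.
  Ltac sidec a b z w := intros i Hi1 Hi2; cbv beta; first
    [ (apply sum0; intros j; destruct (Nat.eq_dec i j); [reflexivity|];
       rewrite (zf_o a b z w i) by auto; meq)
    | (destruct (Nat.eq_dec _ i); [reflexivity|]; rewrite (zf_o a b z w i) by auto; meq)
    | (rewrite (zf_o a b z w i) by auto; meq) ].
  repeat (rewrite (sum2' _ N a b); [|auto|auto|auto|sidec a b z w]).
  destruct (Nat.eq_dec a a); [|congruence]. destruct (Nat.eq_dec a b); [congruence|].
  destruct (Nat.eq_dec b a); [congruence|]. destruct (Nat.eq_dec b b); [|congruence].
  rewrite zf_a, zf_b by auto. meq.
Qed.
Definition RHS a b z w (alpha beta : nat -> nat -> Cplx) (gamma : nat -> Cplx) : M2 :=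
  madd (madd (madd (msmul (alpha a b) (mmul (mmul (Xm z) (Xm z)) (Xm w))) (msmul (beta a b) (mmul (mmul (Xm z) (Xm w)) (Xm z))))
             (madd (msmul (alpha b a) (mmul (mmul (Xm w) (Xm w)) (Xm z))) (msmul (beta b a) (mmul (mmul (Xm w) (Xm z)) (Xm w)))))
       (madd (msmul (gamma a) (mmul (mmul (Xm z) (Xm z)) (Xm z))) (msmul (gamma b) (mmul (mmul (Xm w) (Xm w)) (Xm w)))).

Lemma eqn N U u alpha beta gamma a b z w : is_universal_S N U u ->
  lincomb5p3 N U u alpha beta gamma = azero ->
  a <> b -> (a < N)%nat -> (b < N)%nat -> cn2 z + cn2 w = 1 ->
  Cre (e12 (RHS a b z w alpha beta gamma)) = 0 /\ Cim (e12 (RHS a b z w alpha beta gamma)) = 0.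
Proof.
  intros [_ HU] Hl Hab Ha Hb Hzw.
  destruct (HU M2alg _ (rel_y N a b z w Hab Ha Hb Hzw)) as [phi [[Hphi Hu] _]].
  pose proof (hom_lincomb N U M2alg phi u _ alpha beta gamma Hphi Hu) as E.
  rewrite Hl, (hom_0 _ _ _ Hphi), lincomb_y in E by auto.
  unfold RHS. rewrite <- E. simpl. split; reflexivity.
Qed.

Theorem lemma5p3 (N : nat) (HN : (2 <= N)%nat) (U : CStarAlg) (u : nat -> U)
  (HU : is_universal_S N U u)
  (alpha beta : nat -> nat -> Cplx) (gamma : nat -> Cplx) :
  lincomb5p3 N U u alpha beta gamma = azero ->
  (forall a b, (a < N)%nat -> (b < N)%nat -> a <> b ->
     alpha a b = C0 /\ beta a b = C0) /\
  (forall a, (a < N)%nat -> gamma a = C0).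
Proof.
  intros Hl.
  assert (G : forall a b, (a < N)%nat -> (b < N)%nat -> a <> b -> gamma a = C0).
  { intros a b Ha Hb Hab.
    destruct (eqn N U u alpha beta gamma a b C1 C0 HU Hl Hab Ha Hb) as [E1 E2].
    unfold cn2; simpl; lra.
    unfold RHS in E1, E2; simpl in E1, E2. apply Cext; simpl; lra. }
  split.
  - intros a b Ha Hb Hab.
    assert (Ga := G a b Ha Hb Hab). assert (Gb := G b a Hb Ha (not_eq_sym Hab)).
    pose (c := 3/5). pose (s := 4/5).
    destruct (eqn N U u alpha beta gamma a b (Cmk c 0) (Cmk s 0) HU Hl Hab Ha Hb) as [E1 E2].
    unfold cn2, c, s; simpl; lra.
    destruct (eqn N U u alpha beta gamma a b (Cmk c 0) (Cmk (-s) 0) HU Hl Hab Ha Hb) as [E3 E4].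
    unfold cn2, c, s; simpl; lra.
    destruct (eqn N U u alpha beta gamma a b (Cmk c 0) (Cmk 0 s) HU Hl Hab Ha Hb) as [E5 E6].
    unfold cn2, c, s; simpl; lra.
    destruct (eqn N U u alpha beta gamma a b (Cmk c 0) (Cmk 0 (-s)) HU Hl Hab Ha Hb) as [E7 E8].
    unfold cn2, c, s; simpl; lra.
    unfold RHS in *; simpl in *. rewrite Ga, Gb in *. simpl in *. unfold c, s in *.
    split; apply Cext; simpl; lra.
  - intros a Ha. destruct (Nat.eq_dec a 0) as [->|H0].
    + apply (G 0%nat 1%nat); lia.
    + apply (G a 0%nat); lia.
Qed.
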